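(* For every sesquiad $A$, the topological space $\operatorname{spec}_cA$ is compact (every open cover has a finite subcover).
   Context: Rings are commutative with $1$; monoids are commutative with $1$ and a zero $0$. A sesquiad is a monoid $A$ with an addition: partially defined sums $\sum_jk_ja_j$ ($k\in\mathbb Z^n$, $n\ge2$) coming from an injective monoid morphism $\varphi:A\to R$ into a ring with $\varphi(0)=0$, a sum being defined exactly when $\sum_jk_j\varphi(a_j)\in\varphi(A)$ and then equal to its preimage; sesquiad morphisms are monoid morphisms preserving defined sums. A congruence on $A$ is an equivalence relation $\mathcal C$ on $A$ such that $A/\mathcal C$ admits an addition making $A\to A/\mathcal C$ a sesquiad morphism. A congruence is prime if $A/\mathcal C$ is integral: $1\not\sim0$ and $af\sim bf$ implies $a\sim b$ or $f\sim 0$. $\operatorname{spec}_cA$ is the set of prime congruences on $A$ with the topology generated by the sets $D(a,b)=\{\mathcal C\in\operatorname{spec}_cA:(a,b)\notin\mathcal C\}$, $a,b\in A$. *)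

(* Defs.v *)
From HB Require Import structures.
From mathcomp Require Import all_boot all_order all_algebra.
From Stdlib Require Lists.List.
Set Implicit Arguments. Unset Strict Implicit. Unset Printing Implicit Defensive.
Import GRing.Theory.
Local Open Scope ring_scope.

(* A sesquiad is given by a commutative monoid with zero (car, smul, sone,
   szero) together with an injective monoid morphism [emb] into a commutative
   ring (zero ring allowed: comPzRingType) sending 0 to 0.  The addition of
   the sesquiad is the induced partial sum structure [sdefined] below; all
   notions used here (congruences, spec_c) depend only on it. *)
Record sesquiad := Sesquiad {
  scar :> Type;
  smul : scar -> scar -> scar;
  sone : scar;
  szero : scar;
  smulC : forall a b, smul a b = smul b a;
  smulA : forall a b c, smul a (smul b c) = smul (smul a b) c;
  smul1 : forall a, smul sone a = a;
  smul0 : forall a, smul szero a = szero;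
  sring : comPzRingType;
  emb : scar -> sring;
  emb_inj : forall a b, emb a = emb b -> a = b;
  emb_mul : forall a b, emb (smul a b) = emb a * emb b;
  emb_one : emb sone = 1;
  emb_zero : emb szero = 0 }.

Definition sdefined (A : sesquiad) (n : nat) (k : 'I_n -> int) (a : 'I_n -> A)
  (c : A) : Prop :=
  (2 <= n)%N /\ \sum_(j < n) (emb (a j)) *~ (k j) = emb c.

(* Congruence: an equivalence relation C such that A/C carries a sesquiad
   structure making A -> A/C a sesquiad morphism.  Equivalently (unfolding
   the definition of a sesquiad on A/C): there is a map psi from A to a
   commutative ring, whose kernel relation is exactly C (so psi induces an
   injection of A/C), which is multiplicative, sends 1 to 1 and 0 to 0, and
   such that every defined sum in A is mapped to the corresponding sum,
   i.e. the sum  \sum k_j [a_j]  is defined in A/C with value [c]. *)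
Definition congruence (A : sesquiad) (C : A -> A -> Prop) : Prop :=
  (forall a, C a a) /\ (forall a b, C a b -> C b a) /\
  (forall a b c, C a b -> C b c -> C a c) /\
  exists (S : comPzRingType) (psi : A -> S),
    (forall a b, C a b <-> psi a = psi b) /\
    (forall a b, psi (smul a b) = psi a * psi b) /\
    psi (sone A) = 1 /\ psi (szero A) = 0 /\
    (forall n (k : 'I_n -> int) (a : 'I_n -> A) (c : A),
        sdefined k a c -> \sum_(j < n) (psi (a j)) *~ (k j) = psi c).

(* Prime congruence: A/C is integral. *)
Definition prime_congruence (A : sesquiad) (C : A -> A -> Prop) : Prop :=
  congruence C /\ ~ C (sone A) (szero A) /\
  (forall a b f, C (smul a f) (smul b f) -> C a b \/ C f (szero A)).

Definition spec_c (A : sesquiad) : Type :=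
  { C : A -> A -> Prop | prime_congruence C }.

Definition Dab (A : sesquiad) (a b : A) : spec_c A -> Prop :=
  fun P => ~ (proj1_sig P) a b.

Inductive gen_open (X : Type) (B : (X -> Prop) -> Prop) : (X -> Prop) -> Prop :=
| go_sub U : B U -> gen_open B U
| go_full : gen_open B (fun _ => True)
| go_inter U V : gen_open B U -> gen_open B V ->
    gen_open B (fun x => U x /\ V x)
| go_union (I : Type) (F : I -> X -> Prop) :
    (forall i, gen_open B (F i)) -> gen_open B (fun x => exists i, F i x).

Definition spec_open (A : sesquiad) : (spec_c A -> Prop) -> Prop :=
  gen_open (fun U => exists a b : A, forall P, U P <-> Dab a b P).

Definition compact (X : Type) (opn : (X -> Prop) -> Prop) : Prop :=
  forall (I : Type) (U : I -> X -> Prop),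
    (forall i, opn (U i)) -> (forall x, exists i, U i x) ->
    exists s : list I, forall x, exists i, Stdlib.Lists.List.In i s /\ U i x.

(* Main.v *)
Require Import Defs.
From HB Require Import structures.
From mathcomp Require Import all_boot all_order all_algebra.
From Stdlib Require Import Classical ClassicalEpsilon FunctionalExtensionality PropExtensionality ProofIrrelevance.
Set Implicit Arguments. Unset Strict Implicit. Unset Printing Implicit Defensive.
Import GRing.Theory.
Local Open Scope ring_scope.


Section Tower.
Variable T : Type.
Definition zsub (A B : T -> Prop) := forall t, A t -> B t.
Definition zchain (ch : (T->Prop)->Prop) := forall A B, ch A -> ch B -> zsub A B \/ zsub B A.
Definition bigU (ch : (T->Prop)->Prop) : T -> Prop := fun t => exists A, ch A /\ A t.
Lemma ext_sub (A B : T -> Prop) : zsub A B -> zsub B A -> A = B.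
Proof. intros H1 H2; apply functional_extensionality; intro t; apply propositional_extensionality; split; auto. Qed.
Lemma sub_bigU ch A : ch A -> zsub A (bigU ch).
Proof. intros H t Ht; exists A; auto. Qed.

Variable g : (T->Prop) -> (T->Prop).
Hypothesis g_ext : forall M, zsub M (g M).
Variable Q0 : T -> Prop.
Definition tower (W : (T->Prop)->Prop) := W Q0 /\ (forall M, W M -> W (g M)) /\
  (forall ch, zchain ch -> (forall A, ch A -> W A) -> (exists A, ch A) -> W (bigU ch)).
Definition InT M := forall W, tower W -> W M.
Lemma In_tower : tower InT.
Proof.
split; [|split].
- intros W [H _]; exact H.
- intros M HM W HW. pose proof (HM W HW). destruct HW as [_ [H1 _]]. auto.
- intros ch Hc Hch Hne W HW. pose proof HW as [_ [_ H1]]. apply H1; auto.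
  intros A HA; apply (Hch A HA W HW).
Qed.
Lemma In_ind (W : (T->Prop)->Prop) : tower W -> forall M, InT M -> W M.
Proof. intros HW M HM; apply HM, HW. Qed.

Lemma In_Q0 M : InT M -> zsub Q0 M.
Proof.
apply (@In_ind (fun M => zsub Q0 M)). split; [|split].
- intros t h; exact h.
- intros M0 HM t h; apply g_ext, HM, h.
- intros ch _ Hch [A HA] t h. exists A; split; auto. apply (Hch A HA t h).
Qed.

Definition strict A B := zsub A B /\ ~ zsub B A.
Definition extreme c := forall x, InT x -> strict x c -> zsub (g x) c.

Lemma lem1 c : InT c -> extreme c -> forall x, InT x -> zsub x c \/ zsub (g c) x.
Proof.
intros Ic Ec x Ix.
enough (H : InT x /\ (zsub x c \/ zsub (g c) x)) by apply H.
revert x Ix.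
apply (@In_ind (fun x => InT x /\ (zsub x c \/ zsub (g c) x))). split; [|split].
- split; [apply In_tower | left; apply In_Q0, Ic].
- intros x [Ix [Hx|Hx]]; (split; [apply In_tower, Ix|]).
  + destruct (classic (zsub c x)) as [Hcx|Hcx].
    * assert (x = c) by (apply ext_sub; auto). subst x. right; intros t h; exact h.
    * left. apply Ec; auto. split; auto.
  + right. intros t h; apply g_ext, Hx, h.
- intros ch Hc Hch Hne. split.
  + apply In_tower; auto. intros A HA; apply (Hch A HA).
  + destruct (classic (exists A, ch A /\ zsub (g c) A)) as [[A [HA Hs]]|Hn].
    * right. intros t h; exists A; split; auto.
    * left. intros t [A [HA h]]. destruct (Hch A HA) as [_ [h1|h1]]; auto.
      exfalso; apply Hn; exists A; auto.
Qed.

Lemma lem2 : forall c, InT c -> extreme c.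
Proof.
intros c Ic.
enough (H : InT c /\ extreme c) by apply H.
revert c Ic.
apply (@In_ind (fun c => InT c /\ extreme c)). split; [|split].
- split; [apply In_tower|]. intros x Ix [_ Hn]. exfalso; apply Hn, In_Q0, Ix.
- intros c [Ic Ec]. split; [apply In_tower, Ic|].
  intros x Ix [Hs Hn]. destruct (lem1 Ic Ec Ix) as [Hxc|Hgx].
  + destruct (classic (zsub c x)) as [Hcx|Hcx].
    * assert (x = c) by (apply ext_sub; auto). subst x. intros t h; exact h.
    * intros t h. apply g_ext. apply (Ec x Ix); auto. split; auto.
  + exfalso; apply Hn, Hgx.
- intros ch Hc Hch Hne. split.
  + apply In_tower; auto. intros A HA; apply (Hch A HA).
  + intros x Ix [Hs Hn].
    destruct (classic (exists c, ch c /\ ~ zsub c x)) as [[c [Hcc Hcx]]|Hno].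
    * destruct (Hch c Hcc) as [Ic Ec].
      destruct (lem1 Ic Ec Ix) as [Hxc|Hgx].
      -- intros t h. exists c; split; auto. apply (Ec x Ix); auto. split; auto.
      -- exfalso; apply Hcx. intros t h; apply Hgx, g_ext, h.
    * exfalso; apply Hn. intros t [A [HA h]].
      destruct (classic (zsub A x)) as [h1|h1]; [apply h1, h|].
      exfalso; apply Hno; exists A; auto.
Qed.

Lemma In_chain : zchain InT.
Proof.
intros x y Ix Iy. destruct (lem1 Iy (lem2 Iy) Ix) as [h|h]; auto.
right. intros t h1; apply h, g_ext, h1.
Qed.
End Tower.

Section ZornS.
Variable T : Type.
Variable adm : (T -> Prop) -> Prop.
Hypothesis adm_chain : forall ch, zchain ch -> (forall A, ch A -> adm A) -> (exists A, ch A) -> adm (bigU ch).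
Variable Q0 : T -> Prop.
Hypothesis adm0 : adm Q0.
Lemma zorn : exists M, adm M /\ zsub Q0 M /\ forall N, adm N -> zsub M N -> zsub N M.
Proof.
apply NNPP; intro Hno.
assert (H : forall M, exists N, zsub M N /\ (adm M /\ zsub Q0 M -> adm N /\ ~ zsub N M)).
{ intros M. destruct (classic (adm M /\ zsub Q0 M)) as [[h1 h2]|h].
  - apply NNPP; intro Hn. apply Hno. exists M; split; auto; split; auto.
    intros N hN hMN. apply NNPP; intro hNM. apply Hn. exists N; split; auto.
  - exists M; split; [intros t x; exact x| intro; contradiction]. }
set (g := fun M => epsilon (inhabits M) (fun N => zsub M N /\ (adm M /\ zsub Q0 M -> adm N /\ ~ zsub N M))).
assert (Hg : forall M, zsub M (g M) /\ (adm M /\ zsub Q0 M -> adm (g M) /\ ~ zsub (g M) M)).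
{ intro M. exact (epsilon_spec (inhabits M) (fun N => zsub M N /\ (adm M /\ zsub Q0 M -> adm N /\ ~ zsub N M)) (H M)). }
assert (gext : forall M, zsub M (g M)) by (intro M; apply Hg).
set (Mx := bigU (InT g Q0)).
assert (IMx : InT g Q0 Mx).
{ apply In_tower; auto. apply In_chain; auto. exists Q0. apply In_tower; auto. }
assert (AMx : adm Mx /\ zsub Q0 Mx).
{ apply (@In_ind _ g Q0 (fun M => adm M /\ zsub Q0 M)); auto. split; [|split].
  - split; auto. intros t h; exact h.
  - intros M hM. destruct (Hg M) as [h1 h2]. split; [apply h2; auto|].
    intros t h; apply h1, hM, h.
  - intros ch hc hch [A hA]. split. { apply adm_chain; auto. intros B hB; apply hch; auto. exists A; auto. }
    intros t h; exists A; split; auto. apply (proj2 (hch A hA)), h. }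
destruct (Hg Mx) as [_ h]. destruct (h AMx) as [_ hn]. apply hn.
apply sub_bigU. apply In_tower; auto.
Qed.
End ZornS.


Section UltraRing.
Variables (X : Type) (S : X -> comPzRingType) (U : (X -> Prop) -> Prop).
Hypotheses (UT : U (fun _ => True))
  (Usup : forall A B : X -> Prop, U A -> (forall x, A x -> B x) -> U B)
  (Uint : forall A B : X -> Prop, U A -> U B -> U (fun x => A x /\ B x)).

Definition V := forall x, S x.
Definition equiv (v w : V) := U (fun x => v x = w x).
Lemma eq_refl' v : equiv v v. Proof. by apply: Usup UT _. Qed.
Lemma eq_sym' v w : equiv v w -> equiv w v. Proof. by move=> h; apply: Usup h _. Qed.
Lemma eq_trans' u v w : equiv u v -> equiv v w -> equiv u w.
Proof. by move=> h1 h2; apply: Usup (Uint h1 h2) _ => x [-> ->]. Qed.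
Lemma eq_comp2 (f : forall x, S x -> S x -> S x) v v' w w' :
  equiv v v' -> equiv w w' -> equiv (fun x => f x (v x) (w x)) (fun x => f x (v' x) (w' x)).
Proof. by move=> h1 h2; apply: Usup (Uint h1 h2) _ => x [-> ->]. Qed.
Lemma eq_comp1 (f : forall x, S x -> S x) v v' :
  equiv v v' -> equiv (fun x => f x (v x)) (fun x => f x (v' x)).
Proof. by move=> h1; apply: Usup h1 _ => x ->. Qed.
Lemma eq_pt (v w : V) : (forall x, v x = w x) -> equiv v w.
Proof. by move=> h; apply: Usup UT _ => x _; apply: h. Qed.

Definition v0 : V := fun x => 0.
Definition rep (v : V) : V := epsilon (inhabits v0) (fun w => equiv w v).
Lemma rep_equiv v : equiv (rep v) v.
Proof. rewrite /rep; apply: (epsilon_spec (inhabits v0) (fun w => equiv w v)); exists v; exact: eq_refl' v. Qed.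
Lemma rep_eq v w : equiv v w -> rep v = rep w.
Proof.
move=> h; rewrite /rep.
have -> : (fun u => equiv u v) = (fun u => equiv u w); last by [].
apply: functional_extensionality => u; apply: propositional_extensionality; split => h1.
  exact: eq_trans' h1 h.
exact: eq_trans' h1 (eq_sym' h).
Qed.
Definition Q := {v : V | rep v = v}.
Definition mk (v : V) : Q := exist _ (rep v) (rep_eq (rep_equiv v)).
Lemma eqQ (q1 q2 : Q) : equiv (proj1_sig q1) (proj1_sig q2) -> q1 = q2.
Proof.
case: q1 q2 => [v1 h1] [v2 h2] /= h.
have e : v1 = v2 by rewrite -h1 -h2; apply: rep_eq.
subst v2; congr exist; apply: proof_irrelevance.
Qed.
Lemma val_mk v : equiv (proj1_sig (mk v)) v. Proof. exact: rep_equiv. Qed.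
Lemma mk_val q : mk (proj1_sig q) = q.
Proof. by apply: eqQ; apply: val_mk. Qed.
Lemma mk_eq v w : mk v = mk w <-> equiv v w.
Proof.
split => h.
  apply: eq_trans' (eq_sym' (val_mk v)) _; rewrite h; exact: val_mk.
by apply: eqQ; apply: eq_trans' (val_mk v) _; apply: eq_trans' h (eq_sym' (val_mk w)).
Qed.

Definition Qeqb (a b : Q) : bool := if excluded_middle_informative (a = b) then true else false.
Lemma QeqP : Equality.axiom Qeqb.
Proof. by move=> a b; rewrite /Qeqb; case: excluded_middle_informative => h; constructor. Qed.
HB.instance Definition _ := hasDecEq.Build Q QeqP.
Definition Qfind (P : pred Q) (n : nat) : option Q :=
  if excluded_middle_informative (exists x, P x) then Some (epsilon (inhabits (mk v0)) (fun x => P x)) else None.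
Lemma Qfind1 P n x : Qfind P n = Some x -> P x.
Proof.
rewrite /Qfind; case: excluded_middle_informative => // h [<-].
exact: (epsilon_spec (inhabits (mk v0)) (fun x => P x) h).
Qed.
Lemma Qfind2 (P : pred Q) : (exists x, P x) -> exists n, Qfind P n.
Proof. by move=> h; exists 0%N; rewrite /Qfind; case: excluded_middle_informative. Qed.
Lemma Qfind3 (P P' : pred Q) : P =1 P' -> Qfind P =1 Qfind P'.
Proof. by move=> h; have -> : P = P' by apply: functional_extensionality. Qed.
HB.instance Definition _ := hasChoice.Build Q Qfind1 Qfind2 Qfind3.

Definition Qzero : Q := mk v0.
Definition Qadd (a b : Q) : Q := mk (fun x => proj1_sig a x + proj1_sig b x).
Definition Qopp (a : Q) : Q := mk (fun x => - proj1_sig a x).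
Definition Qone : Q := mk (fun x => 1).
Definition Qmul (a b : Q) : Q := mk (fun x => proj1_sig a x * proj1_sig b x).

Lemma mk_add v w : Qadd (mk v) (mk w) = mk (fun x => v x + w x).
Proof. by apply/mk_eq; apply: (eq_comp2 (fun x => +%R)); apply: val_mk. Qed.
Lemma mk_mul v w : Qmul (mk v) (mk w) = mk (fun x => v x * w x).
Proof. by apply/mk_eq; apply: (eq_comp2 (fun x => *%R)); apply: val_mk. Qed.
Lemma mk_opp v : Qopp (mk v) = mk (fun x => - v x).
Proof. by apply/mk_eq; apply: (eq_comp1 (fun x => -%R)); apply: val_mk. Qed.

Ltac qelim := repeat match goal with q : Q |- _ => rewrite -(mk_val q); move: (proj1_sig q) => {q} end.

Lemma QaddA : associative Qadd.
Proof. move=> a b c; qelim => a b c; rewrite !mk_add; apply/mk_eq/eq_pt => x; exact: addrA. Qed.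
Lemma QaddC : commutative Qadd.
Proof. move=> a b; qelim => a b; rewrite !mk_add; apply/mk_eq/eq_pt => x; exact: addrC. Qed.
Lemma Qadd0 : left_id Qzero Qadd.
Proof. move=> a; qelim => a; rewrite /Qzero !mk_add; apply/mk_eq/eq_pt => x; exact: add0r. Qed.
Lemma QaddN : left_inverse Qzero Qopp Qadd.
Proof. move=> a; qelim => a; rewrite /Qzero mk_opp !mk_add; apply/mk_eq/eq_pt => x; exact: addNr. Qed.
HB.instance Definition _ := GRing.isZmodule.Build Q QaddA QaddC Qadd0 QaddN.
Lemma QmulA : associative Qmul.
Proof. move=> a b c; qelim => a b c; rewrite !mk_mul; apply/mk_eq/eq_pt => x; exact: mulrA. Qed.
Lemma QmulC : commutative Qmul.
Proof. move=> a b; qelim => a b; rewrite !mk_mul; apply/mk_eq/eq_pt => x; exact: mulrC. Qed.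
Lemma Qmul1 : left_id Qone Qmul.
Proof. move=> a; qelim => a; rewrite /Qone !mk_mul; apply/mk_eq/eq_pt => x; exact: mul1r. Qed.
Lemma QmulDl : left_distributive Qmul Qadd.
Proof. move=> a b c; qelim => a b c; rewrite [Qadd (mk a) _]mk_add !mk_mul mk_add; apply/mk_eq/eq_pt => x; exact: mulrDl. Qed.
HB.instance Definition _ := GRing.Zmodule_isComPzRing.Build Q QmulA QmulC Qmul1 QmulDl.

Definition QR : comPzRingType := Q.

Lemma mkD v w : (mk (fun x => v x + w x) : QR) = mk v + mk w.
Proof. by rewrite -mk_add. Qed.
Lemma mkM v w : (mk (fun x => v x * w x) : QR) = mk v * mk w.
Proof. by rewrite -mk_mul. Qed.
Lemma mk0 : (mk v0 : QR) = 0. Proof. by []. Qed.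
Lemma mkN v : (mk (fun x => - v x) : QR) = - mk v.
Proof. by rewrite -mk_opp. Qed.
Lemma mk1 : (mk (fun x => 1) : QR) = 1. Proof. by []. Qed.
Lemma mkMz v (k : int) : (mk (fun x => v x *~ k) : QR) = mk v *~ k.
Proof.
have hn : forall n, (mk (fun x => v x *+ n) : QR) = mk v *+ n.
  elim=> [|n IH]; first by rewrite mulr0n -mk0; apply/mk_eq/eq_pt => x; rewrite mulr0n.
  by rewrite mulrS -IH -mkD; apply/mk_eq/eq_pt => x; rewrite mulrS.
case: k => n /=; first exact: hn.
rewrite NegzE mulrNz -[mk v *~ _]/(mk v *+ n.+1) -hn -mkN; apply/mk_eq/eq_pt => x; by rewrite mulrNz. Qed.
Lemma mk_sum (I : Type) (r : seq I) (f : I -> V) :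
  \sum_(j <- r) (mk (f j) : QR) = mk (fun x => \sum_(j <- r) f j x).
Proof.
elim: r => [|j r IH]; first by rewrite big_nil -mk0; apply/mk_eq/eq_pt => x; rewrite big_nil.
rewrite big_cons IH -mkD; apply/mk_eq/eq_pt => x; by rewrite big_cons.
Qed.
Lemma mkR_mul (u v w : V) : (forall x, u x = v x * w x) -> (mk u : QR) = mk v * mk w.
Proof. by move=> h; rewrite -mkM; apply/mk_eq/eq_pt. Qed.
Lemma mkR_one (u : V) : (forall x, u x = 1) -> (mk u : QR) = 1.
Proof. by move=> h; rewrite -mk1; apply/mk_eq/eq_pt. Qed.
Lemma mkR_zero (u : V) : (forall x, u x = 0) -> (mk u : QR) = 0.
Proof. by move=> h; rewrite -mk0; apply/mk_eq/eq_pt. Qed.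
Lemma mkR_sum n (k : 'I_n -> int) (f : 'I_n -> V) (u : V) :
  (forall x, \sum_(j < n) f j x *~ k j = u x) -> \sum_(j < n) (mk (f j) : QR) *~ k j = mk u.
Proof.
move=> h; under eq_bigr do rewrite -mkMz.
by rewrite mk_sum; apply/mk_eq/eq_pt.
Qed.
Lemma mkR_eq v w : ((mk v : QR) = (mk w : QR)) <-> equiv v w.
Proof. exact: mk_eq. Qed.
End UltraRing.


Definition filt (X : Type) (M : (X -> Prop) -> Prop) :=
  M (fun _ => True) /\ (forall A B : X -> Prop, M A -> (forall x, A x -> B x) -> M B) /\
  (forall A B : X -> Prop, M A -> M B -> M (fun x => A x /\ B x)).

Lemma ultra_exists (X : Type) (F0 : (X -> Prop) -> Prop) :
  filt F0 -> ~ F0 (fun _ => False) ->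
  exists M, filt M /\ ~ M (fun _ => False) /\ (forall Y, F0 Y -> M Y) /\
    (forall Y, M Y \/ M (fun x => ~ Y x)).
Proof.
move=> hF0 pF0.
pose adm := fun M : (X -> Prop) -> Prop => filt M /\ ~ M (fun _ => False).
have [M [[fM pM] [sM maxM]]] : exists M, adm M /\ zsub F0 M /\ forall N, adm N -> zsub M N -> zsub N M.
  apply: zorn; last by split.
  move=> ch hch hadm [A0 hA0]; split; last first.
    by case=> B [hB hBe]; case: (hadm B hB) => _; apply.
  split; [|split].
  - by exists A0; split => //; case: (hadm A0 hA0) => [[]].
  - move=> A B [A1 [h1 h2]] hAB; exists A1; split => //.
    by case: (hadm A1 h1) => [[_ [hs _]] _]; apply: hs h2 hAB.
  - move=> A B [A1 [h1 h2]] [B1 [h3 h4]].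
    case: (hch A1 B1 h1 h3) => hs.
    + exists B1; split => //; case: (hadm B1 h3) => [[_ [_ hi]] _]; apply: hi => //; exact: hs.
    + exists A1; split => //; case: (hadm A1 h1) => [[_ [_ hi]] _]; apply: hi => //; exact: hs.
exists M; split => //; split => //; split => // Y.
case: (classic (M (fun x => ~ Y x))) => hY; [by right|left].
pose N := fun Z : X -> Prop => exists F, M F /\ forall x, F x -> Y x -> Z x.
have hMN : zsub M N by move=> Z hZ; exists Z; split => // x h _.
have aN : adm N.
  case: fM => [fT [fs fi]].
  split; [split; [|split]|].
  - by exists (fun _ => True).
  - move=> A B [F [hF h]] hAB; exists F; split => // x h1 h2; apply: hAB; exact: h.
  - move=> A B [F [hF h]] [G [hG h']]; exists (fun x => F x /\ G x); split; first exact: fi.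
    by move=> x [h1 h2] hy; split; [apply: h|apply: h'].
  - case=> F [hF h]; apply: hY; apply: fs hF _ => x hx hy; exact: h x hx hy.
apply: (maxM N aN hMN); exists (fun _ => True); split; [by case: fM | by move=> x _ h].
Qed.

Definition pprops (A : sesquiad) (C : A -> A -> Prop) (S : comPzRingType) (psi : A -> S) :=
    (forall a b, C a b <-> psi a = psi b) /\
    (forall a b, psi (smul a b) = psi a * psi b) /\
    psi (sone A) = 1 /\ psi (szero A) = 0 /\
    (forall n (k : 'I_n -> int) (a : 'I_n -> A) (c : A),
        sdefined k a c -> \sum_(j < n) (psi (a j)) *~ (k j) = psi c).

Theorem mainTheorem7 (A : sesquiad) : compact (@spec_open A).
Proof.
move=> I Uc HUo Hcov; apply: NNPP => Hnf.
pose X := spec_c A.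
have FIP : forall s : list I, exists x : X, forall i, List.In i s -> ~ Uc i x.
  move=> s; apply: NNPP => h; apply: Hnf; exists s => x.
  apply: NNPP => h2; apply: h; exists x => i hi hU; apply: h2; by exists i.
pose F0 := fun Y : X -> Prop => exists s : list I, forall x, (forall i, List.In i s -> ~ Uc i x) -> Y x.
have fF0 : filt F0.
  split; [|split].
  - by exists nil.
  - move=> Y Z [s1 hs] hYZ; exists s1 => y h; apply: hYZ; exact: hs.
  - move=> Y Z [s1 hs] [t1 ht]; exists (s1 ++ t1)%list => y h; split.
      by apply: hs => i hi; apply: h; apply: List.in_or_app; left.
    by apply: ht => i hi; apply: h; apply: List.in_or_app; right.
have pF0 : ~ F0 (fun _ => False).
  by case=> s hs; case: (FIP s) => x hx; exact: hs x hx.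
have [M [[MT [Msup Mint]] [pM [sM uM]]]] := ultra_exists fF0 pF0.
have H1 : forall P : X, exists (S : comPzRingType) (psi : A -> S), pprops (proj1_sig P) psi.
  by move=> P; case: (proj2_sig P) => [[_ [_ [_ h]]] _].
pose SP := fun P : X => proj1_sig (constructive_indefinite_description _ (H1 P)).
have H2 : forall P : X, exists psi : A -> SP P, pprops (proj1_sig P) psi.
  by move=> P; exact: (proj2_sig (constructive_indefinite_description _ (H1 P))).
pose psiP := fun P : X => proj1_sig (constructive_indefinite_description _ (H2 P)).
have H3 : forall P : X, pprops (proj1_sig P) (psiP P).
  by move=> P; exact: (proj2_sig (constructive_indefinite_description _ (H2 P))).
have Hpc : forall P : X, prime_congruence (proj1_sig P) by move=> P; exact: (proj2_sig P).
pose C := fun a b : A => M (fun P : X => proj1_sig P a b).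
pose R := QR SP MT Msup Mint.
pose psi := fun a : A => (mk (S:=SP) MT Msup Mint (fun P => psiP P a) : R).
have hC : prime_congruence C.
  split; [split; [|split; [|split]]|split].
  - move=> a; apply: (Msup _ _ MT) => P _; case: (Hpc P) => [[h _] _]; exact: h.
  - move=> a b hab; apply: (Msup _ _ hab) => P; case: (Hpc P) => [[_ [h _]] _]; exact: h.
  - move=> a b c hab hbc; apply: (Msup _ _ (Mint _ _ hab hbc)) => P [h1 h2].
    case: (Hpc P) => [[_ [_ [h _]]] _]; exact: h h1 h2.
  - exists R, psi; split; [|split; [|split; [|split]]].
    + move=> a b; rewrite /psi mkR_eq; split => h.
        by apply: (Msup _ _ h) => P; case: (H3 P) => [h3 _]; case: (h3 a b).
      by apply: (Msup _ _ h) => P; case: (H3 P) => [h3 _]; case: (h3 a b).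
    + move=> a b; rewrite /psi; apply: mkR_mul => P.
      by case: (H3 P) => [_ [h _]]; apply: h.
    + rewrite /psi; apply: mkR_one => P; by case: (H3 P) => [_ [_ [h _]]].
    + rewrite /psi; apply: mkR_zero => P; by case: (H3 P) => [_ [_ [_ [h _]]]].
    + move=> n k a c hs; rewrite /psi; apply: mkR_sum => P.
      by case: (H3 P) => [_ [_ [_ [_ h]]]]; apply: h.
  - move=> h; apply: pM; apply: (Msup _ _ h) => P; case: (Hpc P) => [_ [h0 _]]; exact: h0.
  - move=> a b f h.
    case: (uM (fun P : X => proj1_sig P a b)) => hY; [by left | right].
    apply: (Msup _ _ (Mint _ _ h hY)) => P [h1 h2].
    case: (Hpc P) => [_ [_ hp]]; case: (hp a b f h1) => //.
pose Cp := (exist _ C hC : X).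
have Hopen : forall W, spec_open W -> W Cp -> M W.
  move=> W; elim.
  - move=> W0 [a [b hab]] hW.
    have nC : ~ C a b by move/hab: hW.
    case: (uM (fun P : X => proj1_sig P a b)) => hY; first by [].
    apply: (Msup _ _ hY) => P hP; apply/hab; exact: hP.
  - by [].
  - move=> U1 U2 _ ih1 _ ih2 [h1 h2]; exact: (Mint _ _ (ih1 h1) (ih2 h2)).
  - move=> J Fm _ ih [j hj]; apply: (Msup _ _ (ih j hj)) => P h; by exists j.
case: (Hcov Cp) => i hi.
have h1 : M (Uc i) := Hopen _ (HUo i) hi.
have h2 : M (fun x => ~ Uc i x).
  apply: sM; exists (i :: nil) => x h; by apply: h; left.
by apply: pM; apply: (Msup _ _ (Mint _ _ h1 h2)) => x [].
Qed.

Print Assumptions mainTheorem7.
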